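(* Let $n\ge5$ be any integer, $r\in\mathbb Z_n$, $\mathsf V=\mathsf V(3,r)$ and $k\ge2$. Then for all $1\le i\le k-1$, on $\mathsf V^{\otimes k}$, $$(\check{\mathsf R}_i-q^{-r^2-2r}\mathrm{id})(\check{\mathsf R}_i+q^{-r^2-2r-2}\mathrm{id})(\check{\mathsf R}_i-q^{-r^2-2r-3}\mathrm{id})=0.$$
   Context: $\mathbb k$ algebraically closed of characteristic zero, $n\ge2$, $q\in\mathbb k$ a primitive $n$th root of unity. $\mathsf D_n$ is the Hopf algebra generated by $a,b,c,d$ with relations $ba=qab$, $db=qbd$, $bc=cb$, $ca=qac$, $dc=qcd$, $da-qad=1-bc$, $a^n=d^n=0$, $b^n=c^n=1$ and $\Delta(a)=a\otimes b+1\otimes a$, $\Delta(d)=d\otimes c+1\otimes d$, $\Delta(b)=b\otimes b$, $\Delta(c)=c\otimes c$. For $1\le\ell\le n$, $s\in\mathbb Z_n$, $\mathsf V(\ell,s)$ is the module with basis $v_1,\dots,v_\ell$ and action $a.v_j=v_{j+1}$ ($j<\ell$), $a.v_\ell=0$, $b.v_j=q^{s+j-1}v_j$, $c.v_j=q^{j-(s+\ell)}v_j$, $d.v_1=0$, $d.v_j=\alpha_{j-1}(\ell)v_{j-1}$ ($j>1$), $\alpha_i(\ell)=\frac{(q^i-1)(1-q^{i-\ell})}{q-1}$. With $[m]=1+q+\dots+q^{m-1}$, $[m]!=[m]\cdots[1]$, $[0]!=1$, the R-matrix is $\mathcal R=\frac1n\sum_{m,s,t=0}^{n-1}\frac{q^{-tm}}{[s]!}a^sb^t\otimes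 c^md^s$. $\mathsf R$ is the action of $\mathcal R$ on $\mathsf V\otimes\mathsf V$ ($a^sb^t$ on the first factor), $\sigma$ the flip, $\check{\mathsf R}=\sigma\mathsf R$, and $\check{\mathsf R}_i=\mathrm{id}^{\otimes(i-1)}\otimes\check{\mathsf R}\otimes\mathrm{id}^{\otimes(k-i-1)}$ on $\mathsf V^{\otimes k}$. *)

(* Defs.v *)
From HB Require Import structures.
From mathcomp Require Import all_boot all_order all_algebra.
From mathcomp Require Export mxtens.
Set Implicit Arguments. Unset Strict Implicit. Unset Printing Implicit Defensive.
Import Order.TTheory GRing.Theory.
Local Open Scope ring_scope.

(* Conventions: an operator on a space with basis indexed by 'I_m is a matrix
   M : 'M_m with  M i j = coefficient of basis vector i in M.(basis vector j),
   so composition of operators is matrix product *m.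
   Basis vector v_{j+1} of V(l,s) (paper, 1-based) is index j : 'I_l (0-based).
   The tensor product of operators is mathcomp-real-closed's tensmx ( *t ),
   basis of V (x) W indexed by mxtens_index (i, j) <-> v_i (x) w_j. *)

Section Dn.
Variable F : fieldType.
Variable q : F.
Variable n : nat.

Definition qint (m : nat) : F := \sum_(j < m) q ^+ j.
Definition qfact (s : nat) : F := \prod_(1 <= m < s.+1) qint m.

Definition alpha (i l : nat) : F :=
  (q ^+ i - 1) * (1 - q ^ (i%:Z - l%:Z)) / (q - 1).

Definition Va (l : nat) : 'M[F]_l :=
  \matrix_(i, j) ((i == j.+1 :> nat)%:R).
Definition Vb (l : nat) (s : int) : 'M[F]_l :=
  \matrix_(i, j) ((i == j)%:R * q ^ (s + (j : nat)%:Z)).          (* q^(s+j-1), 1-based j *)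
Definition Vc (l : nat) (s : int) : 'M[F]_l :=
  \matrix_(i, j) ((i == j)%:R * q ^ ((j : nat).+1%:Z - (s + l%:Z))). (* q^(j-(s+l)), 1-based j *)
Definition Vd (l : nat) : 'M[F]_l :=
  \matrix_(i, j) ((i.+1 == j :> nat)%:R * alpha j l).             (* d.v_j = alpha_{j-1}(l) v_{j-1} *)

Definition Rmat (l : nat) (s0 : int) : 'M[F]_(l * l) :=
  n%:R^-1 *: \sum_(m < n) \sum_(s < n) \sum_(t < n)
     ((q ^- (t * m)) / qfact s) *:
       ((Va l ^+ s *m Vb l s0 ^+ t) *t (Vc l s0 ^+ m *m Vd l ^+ s)).

Definition flipmx (l : nat) : 'M[F]_(l * l) :=
  \matrix_(x, y) ((((mxtens_unindex x).1 == (mxtens_unindex y).2)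
                 && ((mxtens_unindex x).2 == (mxtens_unindex y).1))%:R).

Definition Rcheck (l : nat) (s0 : int) : 'M[F]_(l * l) := flipmx l *m Rmat l s0.

Definition Rcheck_i (l : nat) (s0 : int) (k i : nat)
  : 'M[F]_(l ^ i.-1 * (l * l) * l ^ (k - i.+1)) :=
  (1%:M : 'M[F]_(l ^ i.-1)) *t Rcheck l s0 *t (1%:M : 'M[F]_(l ^ (k - i.+1))).

End Dn.

(* Main.v *)
Require Import Defs.
From HB Require Import structures.
From mathcomp Require Import all_boot all_order all_algebra.
From mathcomp Require Import ring.
Import GRing.Theory.
Local Open Scope ring_scope.

Section Cub.
Variable F : fieldType.
Variables q x : F.
Hypothesis q0 : q != 0.
Hypothesis x0 : x != 0.

Definition G (i j : nat) : F :=
  match i, j with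
  | 0, 0 => 1
  | 1, 3 => x^-1 * q^-2
  | 1, 1 => 1 - q^-2
  | 2, 6 => x^-2 * q^-4
  | 2, 4 => (1 - q^-2) * x^-1 * q^-2
  | 2, 2 => (1 - q^-2) * (1 - q^-1)
  | 3, 1 => x
  | 4, 4 => q^-1
  | 4, 2 => (q - q^-1) * x
  | 5, 7 => x^-1 * q^-2
  | 5, 5 => (q - q^-1) * q^-1
  | 6, 2 => x ^+ 2
  | 7, 5 => x
  | 8, 8 => 1
  | _, _ => 0
  end.

Definition mxof (f : nat -> nat -> F) : 'M_(3*3) := \matrix_(i, j) f i j.

Definition sum9 (f : nat -> F) := f 0%N + f 1%N + f 2%N + f 3%N + f 4%N + f 5%N + f 6%N + f 7%N + f 8%N.

Lemma sum9E (f : nat -> F) : \sum_(k < 3 * 3) f k = sum9 f.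
Proof. by rewrite !big_ord_recr big_ord0 /= add0r. Qed.

Lemma mulmxF (f g : nat -> nat -> F) :
  mxof f *m mxof g
  = mxof (fun i j => sum9 (fun k => f i k * g k j)).
Proof.
apply/matrixP => i j; rewrite !mxE -sum9E; apply: eq_bigr => k _; by rewrite !mxE.
Qed.

Lemma shiftF (f : nat -> nat -> F) c :
  mxof f + c%:M = mxof (fun i j => f i j + if i == j :> nat then c else 0).
Proof. apply/matrixP => i j; rewrite !mxE -val_eqE /=; by case: eqP => _; rewrite ?mulr1n ?mulr0n. Qed.

Definition M0 : 'M[F]_(3*3) := mxof G.

Lemma cubic : (M0 + (-1)%:M) *m (M0 + (q^-2)%:M) *m (M0 + (- q^-3)%:M) = 0.
Proof.
rewrite /M0 !shiftF !mulmxF.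
apply/matrixP => -[i Hi] [j Hj]; rewrite /mxof !mxE /=.
destruct i as [|[|[|[|[|[|[|[|[|i]]]]]]]]]; try by [];
destruct j as [|[|[|[|[|[|[|[|[|j]]]]]]]]]; try by [];
 rewrite /sum9 /=; field; by rewrite ?q0 ?x0.

Qed.
End Cub.
Arguments G {F} q x i j.
Arguments mxof {F} f.
Arguments M0 {F} q x.

Section Dg.
Variable F : fieldType.
Definition dg {l} (f : 'I_l -> F) : 'M[F]_l := \matrix_(i, j) ((i == j)%:R * f j).

Lemma mul_dg l (A : 'M[F]_l) f i j : (A *m dg f) i j = A i j * f j.
Proof.
rewrite mxE (bigD1 j) //= big1 => [|k kj]; rewrite mxE ?eqxx ?mul1r ?addr0 //.
by rewrite (negPf kj) mul0r mulr0.
Qed.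

Lemma dg_mul l (A : 'M[F]_l) f i j : (dg f *m A) i j = f i * A i j.
Proof.
rewrite mxE (bigD1 i) //= big1 => [|k ki]; rewrite mxE ?eqxx ?mul1r ?addr0 //.
by rewrite eq_sym (negPf ki) mul0r mul0r.
Qed.

Lemma dg_pow l (f : 'I_l -> F) t : dg f ^+ t = dg (fun j => f j ^+ t).
Proof.
elim: t => [|t IH].
  by apply/matrixP => i j; rewrite !mxE expr0 mulr1.
apply/matrixP => i j; rewrite exprS dg_mul IH !mxE exprS.
by case: eqP => [->|_]; rewrite ?mul1r ?mul0r ?mulr0.
Qed.
End Dg.
Arguments dg {F l} f.

Section Four.
Variable F : fieldType.
Variable n : nat.
Variable q : F.
Hypothesis qp : n.-primitive_root q.
Hypothesis charF : [pchar F] =i pred0.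

Lemma q_neq0 : q != 0.
Proof.
apply/eqP => q0; have := prim_expr_order qp; rewrite q0 expr0n.
by case: n (prim_order_gt0 qp) => //= ? _ /eqP; rewrite eq_sym oner_eq0.
Qed.

Lemma nz_neq0 : n%:Z != 0.
Proof. by rewrite eqz_nat -lt0n (prim_order_gt0 qp). Qed.

Lemma qz a : q ^ a = q ^+ `|(a %% n)%Z|%N.
Proof.
rewrite {1}(divz_eq a n) expfzDr ?q_neq0 // -exprz_exp exprzAC.
have -> : q ^ (n%:Z) = 1 by exact: prim_expr_order.
by rewrite exp1rz mul1r exprnP gez0_abs // modz_ge0 // nz_neq0.
Qed.

Lemma geo (w : F) : w ^+ n = 1 -> \sum_(t < n) w ^+ t = if w == 1 then n%:R else 0.
Proof.
case: eqP => [->|/eqP w1 wn].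
  by rewrite (eq_bigr (fun=> 1)) ?sumr_const ?card_ord // => t _; rewrite expr1n.
have := subrX1 w n; rewrite wn subrr => /esym/eqP; rewrite mulf_eq0 subr_eq0 (negPf w1) /=.
by move/eqP.
Qed.

Lemma fourier a b : n%:R^-1 * \sum_(m < n) \sum_(t < n)
   (q ^- (t * m) * (q ^ a) ^+ t * (q ^ b) ^+ m) = q ^ (a * b).
Proof.
set A := `|(a %% n)%Z|%N.
have HA : A%:Z = (a %% n)%Z by rewrite /A gez0_abs // modz_ge0 // nz_neq0.
have An : (A < n)%N by rewrite -ltz_nat HA ltz_pmod // ltz_nat (prim_order_gt0 qp).
have -> : q ^ a = q ^+ A by rewrite qz.
have inner (m : 'I_n) : \sum_(t < n) (q ^- (t * m) * (q ^+ A) ^+ t * (q ^ b) ^+ m)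
    = (q ^ b) ^+ m * (if A == m then n%:R else 0).
  rewrite -mulr_suml mulrC; congr (_ * _).
  rewrite (eq_bigr (fun t : 'I_n => (q ^+ A / q ^+ m) ^+ t)); last first.
    by move=> t _; rewrite exprMn exprVn -!exprM mulnC mulrC.
  rewrite geo; last first. rewrite exprMn exprVn !(exprAC _ _ n). by rewrite (prim_expr_order qp) !expr1n invr1 mulr1.
  have -> : (q ^+ A / q ^+ m == 1) = (q ^+ A == q ^+ m).
    apply/eqP/eqP => [h|->]. 2: by rewrite divff // expf_neq0 // q_neq0.
    by move: h => /(congr1 (fun z => z * q ^+ m)); rewrite mul1r divfK // expf_neq0 // q_neq0.
  by rewrite (eq_prim_root_expr qp) !modn_small.
rewrite (eq_bigr _ (fun m _ => inner m)).
rewrite (bigD1 (Ordinal An)) //= eqxx big1 => [|m]; last first.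
  by rewrite -val_eqE /= eq_sym => /negPf ->; rewrite mulr0.
have n0 : n%:R != 0 :> F by rewrite ((pcharf0P _).1 charF) -lt0n (prim_order_gt0 qp).
rewrite addr0 mulrCA mulVf // mulr1.
rewrite exprnP exprz_exp qz [in RHS]qz HA.
by rewrite modzMmr mulrC.
Qed.
End Four.

Section Main.
Variable F : fieldType.
Variable n : nat.
Variable q : F.
Hypothesis qp : n.-primitive_root q.
Hypothesis charF : [pchar F] =i pred0.
Variable r : int.
Hypothesis n3 : (3 <= n)%N.

Lemma Vb_dg l s : Vb q l s = dg (fun j : 'I_l => q ^ (s + (j:nat)%:Z)).
Proof. by apply/matrixP => i j; rewrite !mxE. Qed.

Lemma Vc_dg l s : Vc q l s = dg (fun j : 'I_l => q ^ ((j:nat).+1%:Z - (s + l%:Z))).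
Proof. by apply/matrixP => i j; rewrite !mxE. Qed.

Ltac cas3 := apply/matrixP => -[[|[|[|?]]] ?] -[[|[|[|?]]] ?] //;
  rewrite !mxE ?big_ord_recr ?big_ord0 /= ?mxE /=.

Lemma Va2 : Va F 3 ^+ 2 = \matrix_(i, j) ((i:nat) == j.+2)%:R.
Proof. rewrite expr2. cas3. all: by rewrite ?mulr0n ?mulr1n ?mul0r ?mulr0 ?add0r ?addr0 ?mul1r. Qed.

Lemma Va3 : Va F 3 ^+ 3 = 0.
Proof. rewrite exprS Va2. cas3. all: by rewrite ?mulr0n ?mulr1n ?mul0r ?mulr0 ?add0r ?addr0 ?mul1r. Qed.

Lemma Va_big s : (3 <= s)%N -> Va F 3 ^+ s = 0.
Proof. by move=> h; rewrite -(subnK h) exprD Va3 mulr0. Qed.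

Lemma Vd2 : Vd q 3 ^+ 2 = \matrix_(i, j) (((i:nat).+2 == j)%:R * (alpha q 1 3 * alpha q 2 3)).
Proof. rewrite expr2. cas3. all: by rewrite ?mulr0n ?mulr1n ?mul0r ?mulr0 ?add0r ?addr0 ?mul1r. Qed.

Lemma Rmat_entry (i1 i2 j1 j2 : 'I_3) :
  Rmat q n 3 r (mxtens_index (i1, i2)) (mxtens_index (j1, j2)) =
  (\sum_(s < 3) (qfact q s)^-1 * (Va F 3 ^+ s) i1 j1 * (Vd q 3 ^+ s) i2 j2) *
  q ^ ((r + (j1:nat)%:Z) * ((i2:nat).+1%:Z - (r + 3%:Z))).
Proof.
set a := (r + (j1:nat)%:Z); set b := ((i2:nat).+1%:Z - (r + 3%:Z)).
rewrite -(@fourier F n q qp charF a b).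
set g := fun s : nat => (qfact q s)^-1 * (Va F 3 ^+ s) i1 j1 * (Vd q 3 ^+ s) i2 j2.
have trunc : \sum_(s < 3) g s = \sum_(s < n) g s.
  rewrite (big_ord_widen n g n3) (bigID (fun s : 'I_n => (s < 3)%N) predT) /=.
  rewrite [X in _ + X]big1 ?addr0 // => s; rewrite -leqNgt => hs.
  by rewrite /g Va_big // mxE mulr0 mul0r.
rewrite trunc.
have E (m : 'I_n) : (\sum_(s < n) \sum_(t < n) ((q ^- (t * m)) / qfact q s) *:
       ((Va F 3 ^+ s *m Vb q 3 r ^+ t) *t (Vc q 3 r ^+ m *m Vd q 3 ^+ s)))
     (mxtens_index (i1, i2)) (mxtens_index (j1, j2))
   = \sum_(s < n) \sum_(t < n) g s * (q ^- (t * m) * (q ^ a) ^+ t * (q ^ b) ^+ m).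
  rewrite summxE; apply: eq_bigr => s _; rewrite summxE; apply: eq_bigr => t _.
  rewrite mxE tensmxE Vb_dg Vc_dg !dg_pow mul_dg dg_mul /g /a /b /=.
  ring.
rewrite /Rmat mxE summxE (eq_bigr _ (fun m _ => E m)).
rewrite mulrCA; congr (_ * _).
rewrite exchange_big /= mulr_suml; apply: eq_bigr => s _; rewrite mulr_sumr.
by apply: eq_bigr => m _; rewrite mulr_sumr.
Qed.

Lemma Rcheck_entry (i1 i2 j1 j2 : 'I_3) :
  Rcheck q n 3 r (mxtens_index (i1, i2)) (mxtens_index (j1, j2)) =
  Rmat q n 3 r (mxtens_index (i2, i1)) (mxtens_index (j1, j2)).
Proof.
rewrite /Rcheck mxE (bigD1 (mxtens_index (i2, i1))) //= big1 => [|z nz].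
  by rewrite mxE !mxtens_indexK /= !eqxx mul1r addr0.
case: (mxtens_indexP z) nz => k1 k2 nz.
rewrite mxE !mxtens_indexK /=.
case: eqP => [e1|]; case: eqP => [e2|] //=; rewrite ?mul0r //.
by move: nz; rewrite e1 e2 eqxx.
Qed.

Definition xpow (x : F) (a b : nat) := if (a <= b)%N then x ^+ (b - a) else (x ^+ (a - b))^-1.

Lemma xpowE (x : F) (a b : nat) : x ^ (b%:Z - a%:Z) = xpow x a b.
Proof.
rewrite /xpow; case: leqP => h; first by rewrite subzn.
by rewrite -opprB (subzn (ltnW h)) -exprnN.
Qed.

Lemma qabE (a b : nat) : q ^ (a%:Z * (b%:Z - 2%:Z)) = q ^+ (a * b) / q ^+ (2 * a).
Proof.
rewrite (_ : a%:Z * (b%:Z - 2%:Z) = (a*b)%N%:Z - (2*a)%N%:Z); last by rewrite !PoszM; ring.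
by rewrite expfzDr ?(@q_neq0 F n q qp) // -exprnN.
Qed.

Lemma pow_split (a b : nat) :
  q ^ ((r + a%:Z) * (b.+1%:Z - (r + 3%:Z))) =
  q ^ (- r ^+ 2 - 2 * r) * xpow (q ^ r) a b * (q ^+ (a * b) / q ^+ (2 * a)).
Proof.
have e : (r + a%:Z) * (b.+1%:Z - (r + 3%:Z)) =
    (- r ^+ 2 - 2 * r) + r * (b%:Z - a%:Z) + a%:Z * (b%:Z - 2%:Z).
  rewrite -addn1 PoszD; ring.
by rewrite e !expfzDr ?(@q_neq0 F n q qp) // -exprz_exp xpowE qabE.
Qed.

Lemma q_neq1 : q - 1 != 0.
Proof.
rewrite subr_eq0; apply/eqP => q1.
have := prim_order_dvd qp 1; rewrite expr1 q1 eqxx => h.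
by have := dvdn_leq (ltn0Sn _) h; move: n3; case: n => [|[|]].
Qed.

Lemma q_neqm1 : 1 + q != 0.
Proof.
rewrite addrC addr_eq0; apply/negP => /eqP e.
have := prim_order_dvd qp 2; rewrite e sqrrN expr1n eqxx => h.
by have := dvdn_leq (ltn0Sn _) h; move: n3; case: n => [|[|[|]]].
Qed.

Lemma qfact0 : qfact q 0 = 1. Proof. by rewrite /qfact big_geq. Qed.
Lemma qfact1 : qfact q 1 = 1.
Proof. by rewrite /qfact big_nat1 /qint big_ord1 expr0. Qed.
Lemma qfact2 : qfact q 2 = 1 + q.
Proof.
rewrite /qfact big_nat_recr //= big_nat1 /qint !big_ord_recr !big_ord0 /=.
by rewrite !add0r expr0 expr1 mul1r.
Qed.

Lemma alpha1 : alpha q 1 3 = 1 - q^-2.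
Proof.
rewrite /alpha xpowE /xpow /= expr1.
have h := q_neq1; have h0 := @q_neq0 F n q qp.
field; by rewrite h h0.
Qed.
Lemma alpha2 : alpha q 2 3 = q - q^-1.
Proof.
rewrite /alpha xpowE /xpow /= expr1.
have h := q_neq1; have h0 := @q_neq0 F n q qp.
field; by rewrite h h0.
Qed.

Lemma Rcheck_explicit : Rcheck q n 3 r = q ^ (- r ^+ 2 - 2 * r) *: M0 q (q ^ r).
Proof.
have h1 := q_neq1; have h0 := @q_neq0 F n q qp; have h2 := q_neqm1.
have hx : q ^ r != 0 by rewrite expfz_neq0.
apply/matrixP => X Y; case: (mxtens_indexP X) => i1 i2; case: (mxtens_indexP Y) => j1 j2.
rewrite Rcheck_entry Rmat_entry pow_split /M0 /mxof !mxE /=.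
rewrite !big_ord_recr big_ord0 /= expr0 expr1 Va2 Vd2 qfact0 qfact1 qfact2 alpha1 alpha2.
case: i1 => [[|[|[|?]]] ?] //; case: i2 => [[|[|[|?]]] ?] //;
case: j1 => [[|[|[|?]]] ?] //; case: j2 => [[|[|[|?]]] ?] //; rewrite !mxE /= ?alpha1 ?alpha2.
all: rewrite /xpow /=; field; by rewrite ?h0 ?h1 ?h2 ?hx ?oner_neq0.
Qed.

End Main.





Section Tens.
Variable F : fieldType.
Variables a m b : nat.
Definition fT (A : 'M[F]_m) : 'M[F]_(a * m * b) :=
  (1%:M : 'M_a) *t A *t (1%:M : 'M_b).

Lemma fT_sub A B : fT A - fT B = fT (A - B).
Proof. by apply/matrixP => i j; rewrite !mxE mulrBr mulrBl. Qed.
Lemma fT_add A B : fT A + fT B = fT (A + B).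
Proof. by apply/matrixP => i j; rewrite !mxE mulrDr mulrDl. Qed.
Lemma fT_mul A B : fT A *m fT B = fT (A *m B).
Proof. by rewrite /fT !tensmx_mul !mul1mx. Qed.
Lemma fT0 : fT 0 = 0.
Proof. by rewrite /fT tensmx0 tens0mx. Qed.
Lemma fT_scalar c : fT c%:M = c%:M.
Proof.
apply/matrixP => X Y.
case: (mxtens_indexP X) => X1 x3; case: (mxtens_indexP X1) => x1 x2.
case: (mxtens_indexP Y) => Y1 y3; case: (mxtens_indexP Y1) => y1 y2.
rewrite /fT !tensmxE !mxE !(inj_eq (can_inj (@mxtens_indexK _ _))) !xpair_eqE.
rewrite (inj_eq (can_inj (@mxtens_indexK _ _))) xpair_eqE.
by case: (x1 == y1); case: (x2 == y2); case: (x3 == y3); rewrite /= ?mulr1n ?mulr0n ?mul1r ?mulr1 ?mul0r ?mulr0.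
Qed.
End Tens.

Theorem mainTheorem7 (F : closedFieldType) (charF0 : [pchar F] =i pred0)
  (n : nat) (n_ge5 : (5 <= n)%N) (q : F) (q_prim : n.-primitive_root q)
  (r : int) (k : nat) (k_ge2 : (2 <= k)%N) (i : nat)
  (i_ge1 : (1 <= i)%N) (i_le : (i <= k - 1)%N) :
  let Ri := Rcheck_i q n 3 r k i in
  (Ri - (q ^ (- r ^+ 2 - 2 * r))%:M)
    *m (Ri + (q ^ (- r ^+ 2 - 2 * r - 2))%:M)
    *m (Ri - (q ^ (- r ^+ 2 - 2 * r - 3))%:M) = 0.
Proof.
move=> Ri.
have n3 : (3 <= n)%N by apply: leq_trans n_ge5.
have h0 := @q_neq0 F n q q_prim.
have hx : q ^ r != 0 by rewrite expfz_neq0.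
set Q := q ^ (- r ^+ 2 - 2 * r).
have e2 : q ^ (- r ^+ 2 - 2 * r - 2) = Q * q ^- 2 by rewrite expfzDr // -exprnN.
have e3 : q ^ (- r ^+ 2 - 2 * r - 3) = Q * q ^- 3 by rewrite expfzDr // -exprnN.
rewrite e2 e3.
have ER : Ri = @fT F (3 ^ i.-1)%N (3 * 3)%N (3 ^ (k - i.+1))%N (Rcheck q n 3 r) by [].
have ES (c : F) : (c%:M : 'M_(3 ^ i.-1 * (3 * 3) * 3 ^ (k - i.+1)))
    = @fT F (3 ^ i.-1)%N (3 * 3)%N (3 ^ (k - i.+1))%N c%:M by rewrite fT_scalar.
rewrite ER !ES fT_sub fT_add fT_sub !fT_mul.
suff -> : (Rcheck q n 3 r - Q%:M) *m (Rcheck q n 3 r + (Q * q ^- 2)%:M)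
    *m (Rcheck q n 3 r - (Q * q ^- 3)%:M) = 0 by rewrite fT0.
have N (c : F) : - (c%:M : 'M[F]_(3*3)) = (-c)%:M
  by apply/matrixP => ? ?; rewrite !mxE mulNrn.
have S (c : F) (A : 'M[F]_(3*3)) : Q *: A + (Q * c)%:M = Q *: (A + c%:M)
  by rewrite scalerDr scale_scalar_mx.
rewrite (@Rcheck_explicit F n q q_prim charF0 r n3) !N.
rewrite -/Q (_ : - Q = Q * -1); last by rewrite mulrN1.
rewrite -mulrN !S.
rewrite -!scalemxAl -!scalemxAr.
by rewrite -scalemxAl (@cubic _ _ _ h0 hx) !scaler0.
Qed.
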